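(* Let $Q\in\mathbb{R}^{n\times n}$ be symmetric positive definite, $g\in\mathbb{R}^n$, $\sigma\in(0,1/2]$, $tol\ge 0$. There exist constants $\delta_2>0$ and $\bar K\in\mathbb{N}$ (depending only on $Q,g,\sigma,tol,n$) such that, for any iteration of the generic random active set method and conditional on the history up to that iteration, the probability that the method stops within the subsequent $\bar K$ iterations is at least $\delta_2$.
   Context: Consider the problem $\min_{x\in\mathbb{R}^n}\tfrac12 x^TQx+g^Tx$ subject to $x\ge 0$. For index sets $A,B\subseteq\{1,\dots,n\}$, $x_A$ denotes the subvector of $x$ indexed by $A$ and $Q_{A,B}$ the submatrix with rows in $A$ and columns in $B$. For a finite index set $S$ and a vector $p=(p_j)_{j\in S}$ of probabilities, $\mathrm{rand}(S,p)$ denotes a random subset of $S$ containing each $j\in S$ independently with probability $p_j$. Generic random active set method (RAS): Step 0: given $\sigma\in(0,1/2]$, an initial active set $A$, $I=\{1,\dots,n\}\setminus A$, and $tol\ge 0$. Step 1: compute $x_I=-Q_{I,I}^{-1}g_I$ and $s_A=Q_{A,I}x_I+g_A$; set $Im=\{i\in I: x_i\le 0\}$, $Am=\{j\in A: s_j<-tol\}$, $Ip=I\setminus Im$, $Ap=A\setminus Am$. Step 2: if $Im\cup Am=\emptyset$, stop. Otherwise choose (possibly depending on the whole history) vectors $p_{Im}\in\mathbb{R}^{|Im|}$, $p_{Am}\in\mathbb{R}^{|Am|}$ with every entry in $[\sigma,1-\sigma]$, and let $Imc=\mathrm{rand}(Im,p_{Im})$, $Imf=Im\setminus Imc$, $Amc=\mathrm{rand}(Am,p_{Am})$,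 $Amf=Am\setminus Amc$ (fresh independent randomness at each iteration). Step 3: set $I\leftarrow Ip\cup Imf\cup Amc$, $A\leftarrow Ap\cup Amf\cup Imc$, and return to Step 1. *)

(* Defs.v *)
From HB Require Import structures.
From mathcomp Require Import all_boot all_order all_algebra.
From mathcomp Require Import reals.
Set Implicit Arguments. Unset Strict Implicit. Unset Printing Implicit Defensive.
Import Order.TTheory GRing.Theory Num.Theory.
Local Open Scope ring_scope.

Section RAS.
Variables (R : realType) (n : nat) (Q : 'M[R]_n) (g : 'cV[R]_n) (tol : R).

Definition sym_pos_def (M : 'M[R]_n) : Prop :=
  M^T = M /\ forall x : 'cV[R]_n, x != 0 -> 0 < (x^T *m M *m x) 0 0.

Definition QII (I : {set 'I_n}) : 'M[R]_#|I| :=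
  \matrix_(i < #|I|, j < #|I|) Q (enum_val i) (enum_val j).
Definition gI (I : {set 'I_n}) : 'cV[R]_#|I| :=
  \col_(i < #|I|) g (enum_val i) 0.
Definition xI (I : {set 'I_n}) : 'cV[R]_#|I| := - (invmx (QII I) *m gI I).

Definition sA (A : {set 'I_n}) (j : 'I_n) : R :=
  \sum_(i < #|~: A|) Q j (enum_val i) * xI (~: A) i 0 + g j 0.

Definition Im (A : {set 'I_n}) : {set 'I_n} :=
  [set enum_val i | i : 'I_#|~: A| & xI (~: A) i 0 <= 0].
Definition Am (A : {set 'I_n}) : {set 'I_n} := [set j in A | sA A j < - tol].

(* the set of indices that are randomly switched *)
Definition Mv (A : {set 'I_n}) : {set 'I_n} := Im A :|: Am A.

Definition stops (A : {set 'I_n}) : bool := Mv A == set0.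

(* Given C = Imc :|: Amc (the indices selected by rand), the new active set
   A <- Ap :|: Amf :|: Imc. *)
Definition next_act (A C : {set 'I_n}) : {set 'I_n} :=
  (A :\: Am A) :|: (Am A :\: C) :|: (Im A :&: C).

(* probability that rand selects exactly C among Mv A, with independent
   selections of probability p j *)
Definition sel_prob (p : 'I_n -> R) (M C : {set 'I_n}) : R :=
  \prod_(j in M) (if j \in C then p j else 1 - p j).

(* A strategy maps the history of active sets (ending with the current one)
   to the probability vector used at the current iteration. *)
Definition strategy := seq {set 'I_n} -> 'I_n -> R.

Definition valid_strategy (sigma : R) (st : strategy) : Prop :=
  forall (h : seq {set 'I_n}) (A : {set 'I_n}) (j : 'I_n),
    j \in Mv A -> sigma <= st (rcons h A) j <= 1 - sigma.

(* Probability that the method, with past history h and current active set A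
   (at Step 1), stops within the next K iterations. *)
Fixpoint stop_prob (st : strategy) (K : nat) (h : seq {set 'I_n})
    (A : {set 'I_n}) : R :=
  if stops A then 1 else
  match K with
  | 0 => 0
  | K'.+1 =>
      \sum_(C : {set 'I_n} | C \subset Mv A)
        sel_prob (st (rcons h A)) (Mv A) C *
        stop_prob st K' (rcons h A) (next_act A C)
  end.

End RAS.

(* Main.v *)
Require Import Defs.
From HB Require Import structures.
From mathcomp Require Import all_boot all_order all_algebra.
From mathcomp Require Import reals.
From mathcomp Require Import lra ring.
Import Order.TTheory GRing.Theory Num.Theory.
Local Open Scope ring_scope.
Set Implicit Arguments. Unset Strict Implicit. Unset Printing Implicit Defensive.

Section Lin.
Variables (R : realType) (n : nat) (Q : 'M[R]_n) (g : 'cV[R]_n).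

Definition dot (u w : 'cV[R]_n) : R := \sum_k u k 0 * w k 0.

Definition embed (I : {set 'I_n}) (v : 'cV[R]_#|I|) : 'cV[R]_n :=
  \col_k \sum_(i < #|I|) (enum_val i == k)%:R * v i 0.

Lemma embed_ev (I : {set 'I_n}) (v : 'cV[R]_#|I|) i : embed v (enum_val i) 0 = v i 0 :> R.
Proof.
rewrite mxE (bigD1 i) //= eqxx mul1r big1 ?addr0 // => j /negPf ji.
by rewrite (inj_eq enum_val_inj) ji mul0r.
Qed.

Lemma embed_out (I : {set 'I_n}) (v : 'cV[R]_#|I|) k : k \notin I -> embed v k 0 = 0 :> R.
Proof.
move=> kI; rewrite mxE big1 // => j _.
case: eqP => [e|_]; last by rewrite mul0r.
by move: kI; rewrite -e enum_valP.
Qed.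

Lemma dot_embedl (I : {set 'I_n}) (v : 'cV[R]_#|I|) w :
  dot (embed v) w = \sum_(r < #|I|) v r 0 * w (enum_val r) 0.
Proof.
rewrite /dot.
under eq_bigr do rewrite mxE mulr_suml.
rewrite exchange_big /=; apply: eq_bigr => r _.
rewrite (bigD1 (enum_val r)) //= eqxx mul1r big1 ?addr0 // => k /negPf kr.
by rewrite eq_sym kr mul0r mul0r.
Qed.

Lemma Q_embed (I : {set 'I_n}) (v : 'cV[R]_#|I|) k :
  (Q *m embed v) k 0 = \sum_(i < #|I|) Q k (enum_val i) * v i 0.
Proof.
rewrite mxE.
have -> : \sum_j Q k j * embed v j 0 = dot (embed v) (\col_j Q k j).
  by rewrite /dot; apply: eq_bigr => j _; rewrite mxE mulrC.
by rewrite dot_embedl; apply: eq_bigr => r _; rewrite mxE mulrC.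
Qed.

Lemma QII_embed (I : {set 'I_n}) (v : 'cV[R]_#|I|) r :
  (QII Q I *m v) r 0 = (Q *m embed v) (enum_val r) 0.
Proof.
by rewrite Q_embed mxE; apply: eq_bigr => c _; rewrite mxE.
Qed.


Lemma quad_dot (x : 'cV[R]_n) : (x^T *m Q *m x) 0 0 = dot x (Q *m x).
Proof. by rewrite -mulmxA mxE; apply: eq_bigr => k _; rewrite mxE. Qed.

Hypothesis spd : sym_pos_def Q.

Lemma Qsym i j : Q i j = Q j i.
Proof. by case: spd => QT _; rewrite -{1}QT mxE. Qed.

Lemma dot_pos x : x != 0 -> 0 < dot x (Q *m x).
Proof. by case: spd => _ H /H; rewrite quad_dot. Qed.

Lemma dot_ge0 x : 0 <= dot x (Q *m x).
Proof.
have [->|/dot_pos/ltW //] := eqVneq x 0.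
by rewrite /dot big1 // => k _; rewrite mxE mul0r.
Qed.

Lemma QII_sym (I : {set 'I_n}) : (QII Q I)^T = QII Q I.
Proof. by apply/matrixP => i j; rewrite !mxE Qsym. Qed.

Lemma QII_unit (I : {set 'I_n}) : QII Q I \in unitmx.
Proof.
rewrite -row_free_unit; apply: inj_row_free => v vQ.
have vQT : QII Q I *m v^T = 0 by rewrite -[QII Q I]QII_sym -trmx_mul vQ trmx0.
have u0 : embed v^T = 0.
  apply/eqP; apply: contraT => /dot_pos; rewrite dot_embedl.
  rewrite big1 ?ltxx // => r _.
  by rewrite -QII_embed vQT !mxE mulr0.
apply/rowP => j; have := embed_ev (v^T) j.
by rewrite u0 !mxE => <-.
Qed.

Definition z (I : {set 'I_n}) : 'cV[R]_n := embed (xI Q g I).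
Definition G (x : 'cV[R]_n) : 'cV[R]_n := Q *m x + g.

Lemma z_out (I : {set 'I_n}) (k : 'I_n) : k \notin I -> z I k 0 = 0.
Proof. exact: embed_out. Qed.

Lemma z_stat (I : {set 'I_n}) (k : 'I_n) : k \in I -> G (z I) k 0 = 0.
Proof.
move=> kI; set r := enum_rank_in kI k.
have -> : k = enum_val r by rewrite enum_rankK_in.
rewrite mxE -QII_embed /xI mulmxN mulmxA mulmxV ?QII_unit // mul1mx.
by rewrite !mxE addNr.
Qed.

Lemma sA_G (A : {set 'I_n}) (j : 'I_n) : sA Q g A j = G (z (~: A)) j 0.
Proof. by rewrite /sA mxE Q_embed. Qed.

Lemma Im_z (A : {set 'I_n}) : Defs.Im Q g A = [set k in ~: A | z (~: A) k 0 <= 0].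
Proof.
apply/setP => k; rewrite !inE; apply/imsetP/idP.
  case=> i; rewrite inE => xi ->; rewrite /z embed_ev xi andbT.
  by move: (enum_valP i); rewrite inE.
case/andP=> kA zk; have kI : k \in ~: A by rewrite inE.
exists (enum_rank_in kI k); last by rewrite enum_rankK_in.
by rewrite inE -(embed_ev (xI Q g (~: A))) enum_rankK_in.
Qed.


Lemma dotDl u v w : dot (u + v) w = dot u w + dot v w.
Proof. by rewrite /dot -big_split; apply: eq_bigr => k _; rewrite mxE mulrDl. Qed.
Lemma dotDr u v w : dot w (u + v) = dot w u + dot w v.
Proof. by rewrite /dot -big_split; apply: eq_bigr => k _; rewrite mxE mulrDr. Qed.
Lemma dotZl a u w : dot (a *: u) w = a * dot u w.
Proof. by rewrite /dot mulr_sumr; apply: eq_bigr => k _; rewrite mxE mulrA. Qed.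
Lemma dotC u w : dot u w = dot w u.
Proof. by apply: eq_bigr => k _; rewrite mulrC. Qed.
Lemma dotZr a u w : dot w (a *: u) = a * dot w u.
Proof. by rewrite dotC dotZl dotC. Qed.
Lemma dotNl u w : dot (- u) w = - dot u w.
Proof. by rewrite -scaleN1r dotZl mulN1r. Qed.
Lemma dotQ u w : dot u (Q *m w) = dot w (Q *m u).
Proof.
rewrite /dot.
under eq_bigr do rewrite mxE mulr_sumr.
under [in RHS]eq_bigr do rewrite mxE mulr_sumr.
rewrite exchange_big; apply: eq_bigr => i _; apply: eq_bigr => j _.
by rewrite Qsym; ring.
Qed.

Definition q (x : 'cV[R]_n) : R := dot x (Q *m x) / 2 + dot g x.

Lemma q_taylor x d :
  q (x + d) = q x + dot d (G x) + dot d (Q *m d) / 2.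
Proof.
rewrite /q /G mulmxDr !dotDl !dotDr (dotQ x d) (dotC g d).
by field.
Qed.

Lemma q_min (J : {set 'I_n}) (w : 'cV[R]_n) :
  (forall k, k \notin J -> w k 0 = 0) -> q (z J) <= q w.
Proof.
move=> wJ; have -> : w = z J + (w - z J) by rewrite addrC subrK.
rewrite q_taylor.
have -> : dot (w - z J) (G (z J)) = 0.
  rewrite /dot big1 // => k _.
  case: (boolP (k \in J)) => kJ; first by rewrite z_stat // mulr0.
  rewrite (_ : (w - z J) k 0 = w k 0 - z J k 0); last by rewrite !mxE.
  by rewrite wJ // z_out // subr0 mul0r.
have h := dot_ge0 (w - z J); lra.
Qed.

Lemma q_convex (w y : 'cV[R]_n) (t : R) : 0 <= t -> t <= 1 -> q y <= q w ->
  q (w + t *: (y - w)) <= q w.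
Proof.
move=> t0 t1; have := q_taylor w (y - w); rewrite addrC subrK => ->.
rewrite q_taylor dotZl -scalemxAr !dotZl !dotZr.
set a := dot _ _; set b := dot _ (Q *m _) => h.
have b0 : 0 <= b by apply: dot_ge0.
have h1 : t * (a + b/2) <= 0 by rewrite mulr_ge0_le0 //; lra.
have h2 : 0 <= t * (1 - t) * b by rewrite !mulr_ge0 // subr_ge0.
have e : t * a + t * (t * b) / 2 = t * (a + b/2) - t * (1 - t) * b / 2 by field.
lra.
Qed.

Definition ej (j : 'I_n) : 'cV[R]_n := \col_k (k == j)%:R.

Lemma dot_ej (j : 'I_n) (w : 'cV[R]_n) : dot (ej j) w = w j 0.
Proof.
rewrite /dot (bigD1 j) //= !mxE eqxx mul1r big1 ?addr0 // => k /negPf kj.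
by rewrite mxE kj mul0r.
Qed.

Lemma Qjj_pos (j : 'I_n) : 0 < Q j j.
Proof.
have : ej j != 0.
  apply/eqP => /matrixP/(_ j 0); rewrite !mxE eqxx => /eqP; rewrite oner_eq0.
  done.
move/dot_pos; rewrite dot_ej mxE (bigD1 j) //= mxE eqxx mulr1 big1 ?addr0 //.
by move=> k /negPf kj; rewrite mxE kj mulr0.
Qed.

Lemma q_descent (x : 'cV[R]_n) (j : 'I_n) : G x j 0 < 0 ->
  q (x + (- G x j 0 / Q j j) *: ej j) < q x.
Proof.
move=> Gj; rewrite q_taylor -scalemxAr !dotZl !dotZr !dot_ej.
have Qp := Qjj_pos j.
have -> : (Q *m ej j) j 0 = Q j j.
  rewrite mxE (bigD1 j) //= mxE eqxx mulr1 big1 ?addr0 //.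
  by move=> k /negPf kj; rewrite mxE kj mulr0.
set a := G x j 0; set c := Q j j.
have e : - a / c * a + - a / c * (- a / c * c) / 2 = - (a ^+ 2 / c) / 2.
  by field; rewrite gt_eqF.
rewrite -addrA e.
have : 0 < a ^+ 2 / c by rewrite divr_gt0 // exprn_even_gt0 //= ltr0_neq0.
lra.
Qed.

End Lin.

Section Real.
Variable R : realType.
Definition ratio (a b : R) := if a - b == 0 then 0 else a / (a - b).

Lemma ratio01 a b : 0 <= a -> b <= 0 -> 0 <= ratio a b <= 1.
Proof.
move=> a0 b0; rewrite /ratio; case: eqP => [_|/eqP d0]; first by rewrite lexx ler01.
have dp : 0 < a - b by rewrite lt_neqAle eq_sym d0 /=; lra.
by rewrite divr_ge0 ?(ltW dp) //= ler_pdivrMr // mul1r; lra.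
Qed.

Lemma ratio_zero a b : 0 <= a -> b <= 0 -> a + ratio a b * (b - a) = 0.
Proof.
move=> a0 b0; rewrite /ratio; case: eqP => [e|/eqP d0].
  by rewrite mul0r addr0; apply/eqP; rewrite eq_le; apply/andP; split; lra.
by field.
Qed.

Lemma ratio_le a b t : 0 <= a -> b <= 0 -> 0 <= t -> t <= ratio a b ->
  0 <= a + t * (b - a).
Proof.
move=> a0 b0 t0 tr; have := ratio_zero a0 b0.
have h : 0 <= (ratio a b - t) * (a - b) by rewrite mulr_ge0 // ?subr_ge0 //; lra.
nra.
Qed.

Lemma conv_pos (a b t : R) : 0 <= a -> 0 < b -> 0 <= t -> t <= 1 ->
  0 <= a + t * (b - a).
Proof.
move=> a0 b0 t0 t1.
have -> : a + t * (b - a) = (1 - t) * a + t * b by ring.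
by rewrite addr_ge0 // mulr_ge0 // ?subr_ge0 // ltW.
Qed.
End Real.

Section Comb.
Variables (R : realType) (n : nat) (Q : 'M[R]_n) (g : 'cV[R]_n) (tol : R).
Hypothesis spd : sym_pos_def Q.
Hypothesis tol0 : 0 <= tol.
Implicit Types (A B C J : {set 'I_n}) (k j : 'I_n).

Local Notation Imv := (Defs.Im Q g).
Local Notation Amv := (Am Q g tol).
Local Notation Mvv := (Mv Q g tol).
Local Notation nxt := (next_act Q g tol).
Local Notation stp := (stops Q g tol).

Lemma Im_sub A : Imv A \subset ~: A.
Proof. by rewrite Im_z; apply/subsetP => k; rewrite inE => /andP[]. Qed.
Lemma Am_sub A : Amv A \subset A.
Proof. by apply/subsetP => k; rewrite inE => /andP[]. Qed.

Lemma fix_step A k : k \in Imv A -> nxt A [set k] = k |: A.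
Proof.
move=> kI; have kA : k \notin A by have := subsetP (Im_sub A) k kI; rewrite inE.
apply/setP => x; rewrite !inE.
case: (eqVneq x k) => [->|xk]; first by rewrite kI /= !orbT.
rewrite andbF orbF /=.
by case: (x \in A); case: (sA Q g A x < - tol).
Qed.

Lemma free_step A j : j \in Amv A -> nxt A [set j] = A :\ j.
Proof.
move=> jA; have jnI : j \notin Imv A.
  by apply/negP => /(subsetP (Im_sub A)); rewrite inE (subsetP (Am_sub A) j jA).
apply/setP => x; rewrite !inE.
case: (eqVneq x j) => [->|xj] /=.
  move: jA; rewrite inE => /andP[-> ->] /=; by rewrite (negPf jnI).
rewrite andbF orbF.
by case: (x \in A); case: (sA Q g A x < - tol).
Qed.

Fixpoint reach (K : nat) (A : {set 'I_n}) : bool :=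
  stp A || (if K is K'.+1 then
    [exists C : {set 'I_n}, (C \subset Mvv A) && reach K' (nxt A C)] else false).

Lemma reach_mono K K' A : (K <= K')%N -> reach K A -> reach K' A.
Proof.
elim: K K' A => [|K IH] [|K'] A //= KK.
  by case/orP => [->//|].
case/orP => [->//|/existsP[C /andP[CM r]]].
apply/orP; right; apply/existsP; exists C; rewrite CM /=; exact: IH r.
Qed.

Definition rpath (A B : {set 'I_n}) :=
  exists m, forall K, reach K B -> reach (K + m) A.

Lemma rpath_refl A : rpath A A.
Proof. by exists 0%N => K; rewrite addn0. Qed.

Lemma rpath_trans A B C : rpath A B -> rpath B C -> rpath A C.
Proof.
case=> m1 h1 [m2 h2]; exists (m2 + m1)%N => K r.
by rewrite addnA; apply: h1; apply: h2.
Qed.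

Lemma rpath_step A C : C \subset Mvv A -> rpath A (nxt A C).
Proof.
move=> CM; exists 1%N => K r; rewrite addn1 /=.
apply/orP; right; apply/existsP; exists C; by rewrite CM.
Qed.


Lemma descent N : forall J (w : 'cV[R]_n), (#|J| <= N)%N ->
  (forall k, 0 <= w k 0) -> (forall k, k \notin J -> w k 0 = 0) ->
  exists J', Imv (~: J') = set0 /\ q Q g (z Q g J') <= q Q g w /\
             rpath (~: J) (~: J').
Proof.
elim: N => [|N IH] J w JN w0 wJ;
  (case: (eqVneq (Imv (~: J)) set0) => [E|/set0Pn [k0 k0I]];
   first by exists J; split; [|split; [have := @q_min R n Q g spd J w wJ; exact|exact: rpath_refl]]);
  have ImE : forall i, (i \in Imv (~: J)) = (i \in J) && (z Q g J i 0 <= 0)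
    by move=> i; rewrite Im_z setCK inE.
  by move: JN k0I; rewrite leqn0 cards_eq0 ImE => /eqP ->; rewrite inE.
set y := z Q g J.
pose r := fun i => ratio (w i 0) (y i 0).
have [k kI kmin] := arg_minP r k0I.
have kI' : k \in Imv (~: J) by [].
move: (kI'); rewrite ImE => /andP[kJ yk].
set t := r k.
have /andP[t0 t1] : 0 <= t <= 1 by apply: ratio01.
set w' := w + t *: (y - w).
have w'E : forall i, w' i 0 = w i 0 + t * (y i 0 - w i 0) by move=> i; rewrite !mxE.
have w'0 : forall i, 0 <= w' i 0.
  move=> i; rewrite w'E; case: (boolP (i \in J)) => iJ; last first.
    by rewrite wJ // /y z_out // subrr mulr0 addr0.
  case: (leP (y i 0) 0) => yi.
    have iI : i \in Imv (~: J) by rewrite ImE iJ yi.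
    by apply: ratio_le => //; apply: kmin.
  exact: conv_pos.
have w'J : forall i, i \notin J :\ k -> w' i 0 = 0.
  move=> i; rewrite !inE negb_and negbK => /orP[/eqP->|iJ].
    by rewrite w'E; apply: ratio_zero.
  by rewrite w'E wJ // /y z_out // subrr mulr0 addr0.
have qw' : q Q g w' <= q Q g w.
  apply: (q_convex spd) => //; have := @q_min R n Q g spd J w wJ; exact.
have card : (#|J :\ k| <= N)%N.
  by move: JN; rewrite (cardsD1 k J) kJ.
have [J' [E [qJ' p]]] := IH (J :\ k) w' card w'0 w'J.
exists J'; split => //; split; first exact: le_trans qJ' qw'.
apply: rpath_trans p.
have -> : ~: (J :\ k) = nxt (~: J) [set k].
  by rewrite fix_step //; apply/setP => x; rewrite !inE negb_and negbK.
by apply: rpath_step; rewrite sub1set inE kI'.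
Qed.


Lemma improve I : Imv (~: I) = set0 -> ~~ stp (~: I) ->
  exists I2, Imv (~: I2) = set0 /\ q Q g (z Q g I2) < q Q g (z Q g I) /\
             rpath (~: I) (~: I2).
Proof.
move=> E; rewrite /stops /Mv E set0U => /set0Pn [j jAm].
have jAm' : j \in Amv (~: I) by [].
move: jAm; rewrite inE => /andP[jnI sj].
rewrite sA_G setCK in sj.
have Gj : G Q g (z Q g I) j 0 < 0 by apply: (lt_le_trans sj); rewrite oppr_le0.
set eps := - G Q g (z Q g I) j 0 / Q j j.
have eps0 : 0 <= eps.
  by rewrite /eps divr_ge0 // ?oppr_ge0 ?(ltW Gj) // ltW // (Qjj_pos spd).
set w := z Q g I + eps *: @ej R n j.
have wE : forall k, w k 0 = z Q g I k 0 + eps * (k == j)%:R by move=> k; rewrite !mxE.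
have zI0 : forall k, 0 <= z Q g I k 0.
  move=> k; case: (boolP (k \in I)) => kI; last by rewrite z_out.
  rewrite leNgt; apply/negP => zk.
  have : k \in Imv (~: I) by rewrite Im_z setCK inE kI ltW.
  by rewrite E inE.
have w0 : forall k, 0 <= w k 0.
  by move=> k; rewrite wE addr_ge0 // mulr_ge0 // ler0n.
have wJ : forall k, k \notin j |: I -> w k 0 = 0.
  move=> k; rewrite !inE negb_or => /andP[/negPf kj kI].
  by rewrite wE z_out // kj mulr0 addr0.
have [I2 [E2 [q2 p]]] := descent (leqnn _) w0 wJ.
exists I2; split => //; split.
  apply: (le_lt_trans q2); exact: (q_descent spd Gj).
apply: rpath_trans p.
have -> : ~: (j |: I) = nxt (~: I) [set j].
  by rewrite free_step //; apply/setP => x; rewrite !inE negb_or andbC.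
by apply: rpath_step; rewrite sub1set /Mv inE jAm' orbT.
Qed.

Definition better I := [set I' | (Imv (~: I') == set0) && (q Q g (z Q g I') < q Q g (z Q g I))].

Lemma reach_ok N : forall I, Imv (~: I) = set0 -> (#|better I| <= N)%N ->
  exists K, reach K (~: I).
Proof.
elim: N => [|N IH] I E cN; (case: (boolP (stp (~: I))) => st;
  first by exists 0%N; rewrite /= st);
  have [I2 [E2 [q2 [m p]]]] := improve E st.
  have : I2 \in better I.
    by rewrite inE E2 eqxx q2.
  by move: cN; rewrite leqn0 cards_eq0 => /eqP ->; rewrite inE.
have [K r] : exists K, reach K (~: I2).
  apply: (IH I2 E2); rewrite -ltnS; apply: leq_trans cN.
  apply: proper_card; apply/properP; split.
    apply/subsetP => I'; rewrite !inE => /andP[-> h] /=.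
    exact: lt_trans h q2.
  by exists I2; rewrite !inE E2 eqxx ?q2 // ltxx.
by exists (K + m)%N; apply: p.
Qed.

Lemma reach_ex A : exists K, reach K A.
Proof.
have w0 : forall k, 0 <= (0 : 'cV[R]_n) k 0 by move=> k; rewrite mxE.
have wJ : forall k, k \notin ~: A -> (0 : 'cV[R]_n) k 0 = 0 by move=> k; rewrite mxE.
have [I0 [E0 [_ [m p]]]] := descent (leqnn _) w0 wJ.
have [K r] := reach_ok E0 (leqnn _).
exists (K + m)%N; have := p K r; by rewrite setCK.
Qed.


Lemma reach_unif : exists Kb, forall A, reach Kb A.
Proof.
suff [Kb H] : exists Kb, forall A, A \in enum {set 'I_n} -> reach Kb A.
  by exists Kb => A; apply: H; rewrite mem_enum.
elim: (enum _) => [|A s [Kb H]]; first by exists 0%N.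
have [K r] := reach_ex A.
exists (maxn K Kb) => B; rewrite inE => /orP[/eqP->|Bs].
  by apply: reach_mono r; rewrite leq_maxl.
by apply: reach_mono (H B Bs); rewrite leq_maxr.
Qed.

Variables (sigma : R) (st : strategy R n).
Hypothesis sig0 : 0 < sigma.
Hypothesis sig1 : sigma <= 1 / 2.
Hypothesis vst : valid_strategy Q g tol sigma st.

Lemma sel_bounds h A j : j \in Mvv A ->
  sigma <= st (rcons h A) j /\ sigma <= 1 - st (rcons h A) j.
Proof. by move=> /(vst h) /andP[a b]; split => //; lra. Qed.

Lemma sel_ge0 h A C : 0 <= sel_prob (st (rcons h A)) (Mvv A) C.
Proof.
apply: prodr_ge0 => j jM; have [a b] := sel_bounds h jM.
by case: (j \in C); apply: le_trans (ltW sig0) _.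
Qed.

Lemma sel_lb h A C : sigma ^+ n <= sel_prob (st (rcons h A)) (Mvv A) C.
Proof.
have s1' : sigma <= 1 by apply: (le_trans sig1); rewrite ler_pdivrMr // mul1r ler1n.
apply: (@le_trans _ _ (\prod_(j in Mvv A) sigma)).
  rewrite prodr_const; apply: (ler_wiXn2l (ltW sig0) s1').
  by apply: leq_trans (max_card _) _; rewrite card_ord.
apply: ler_prod => j jM; have [a b] := sel_bounds h jM.
by rewrite (ltW sig0) /=; case: (j \in C).
Qed.

Lemma sp_ge0 K : forall h A, 0 <= stop_prob Q g tol st K h A.
Proof.
elim: K => [|K IH] h A /=; case: (stops _ _ _ _) => //.
by apply: sumr_ge0 => C _; rewrite mulr_ge0 // sel_ge0.
Qed.

Lemma prob_reach K : forall h A, reach K A ->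
  sigma ^+ (n * K) <= stop_prob Q g tol st K h A.
Proof.
have s1 : sigma <= 1 by apply: (le_trans sig1); rewrite ler_pdivrMr // mul1r ler1n.
elim: K => [|K IH] h A /=.
  by rewrite orbF => ->; rewrite muln0 expr0.
case: (boolP (stp A)) => [_ _|_ /= /existsP[C /andP[CM r]]].
  by rewrite exprn_ile1 // ltW.
rewrite (bigD1 C) //=.
apply: le_trans (_ : _ <= sel_prob (st (rcons h A)) (Mvv A) C *
   stop_prob Q g tol st K (rcons h A) (nxt A C)) _.
  rewrite mulnS exprD; apply: ler_pM => //.
  - by rewrite exprn_ge0 // ltW.
  - by rewrite exprn_ge0 // ltW.
  - exact: sel_lb.
  - exact: IH.
rewrite lerDl; apply: sumr_ge0 => D _; rewrite mulr_ge0 // ?sel_ge0 //.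
exact: sp_ge0.
Qed.

End Comb.

Theorem lemma2p2 (R : realType) (n : nat) (Q : 'M[R]_n) (g : 'cV[R]_n)
    (sigma tol : R) :
  sym_pos_def Q -> 0 < sigma -> sigma <= 1 / 2 -> 0 <= tol ->
  exists delta2 : R, 0 < delta2 /\
  exists Kbar : nat,
    forall st : strategy R n, valid_strategy Q g tol sigma st ->
    forall (h : seq {set 'I_n}) (A : {set 'I_n}),
      delta2 <= stop_prob Q g tol st Kbar h A.
Proof.
move=> spd s0 s1 t0.
have [Kb H] := reach_unif g spd t0.
exists (sigma ^+ (n * Kb)); split; first exact: exprn_gt0.
exists Kb => st vst h A.
exact: prob_reach.
Qed.
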